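(* For $\mathcal S=\{000,001,010,111\}\subseteq\{0,1\}^3$, every 3SS scheme with domain $\mathcal S$ satisfies $|\{\mathbf w:\Pr[\psi(\mathbf x,R)=\mathbf w]>0\}|\ge 6$ for some $\mathbf x\in\mathcal S$ (indeed for $\mathbf x=001$); in particular $\rho(\mathcal S)\ge\log_2 6$.
   Context: Binary triples $(x_1,x_2,x_3)\in\{0,1\}^3$ are written $x_1x_2x_3$. Let $\mathcal S\subseteq\{0,1\}^3$ be nonempty. A distribution scheme with domain $\mathcal S$ is a pair $(P_R,\psi)$ where $P_R$ is a probability distribution on a finite set $\mathcal R$ and $\psi:\mathcal S\times\mathcal R\to\mathcal W_{12}\times\mathcal W_{23}\times\mathcal W_{31}$ for finite share alphabets. Given $\mathbf x=(x_1,x_2,x_3)\in\mathcal S$, the shares are $(W_{12},W_{23},W_{31})=\psi(\mathbf x,R)$, $R\sim P_R$. Party $P_1$ sees $V_1=(W_{12},W_{31})$, $P_2$ sees $V_2=(W_{23},W_{12})$, $P_3$ sees $V_3=(W_{31},W_{23})$. It is a 3SS scheme if (Correctness) for each $i$ there is a function $\phi_i$ with $\Pr[\phi_i(V_i)=x_i]=1$ for every $\mathbf x\in\mathcal S$, and (Perfect privacy) for each $i$ and all $\mathbf x,\mathbf x'\in\mathcal S$ with $x_i=x'_i$, $V_i$ has the same distribution under secret $\mathbf x$ as under $\mathbf x'$. The randomness complexity $\rho(\mathcal S)$ is the minimum of $\log_2|\mathcal R|$ over all 3SS schemes with domain $\mathcal S$. *)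

(* Defs.v *)
From HB Require Import structures.
From mathcomp Require Import all_boot all_order all_algebra.
From mathcomp Require Import reals.
Set Implicit Arguments. Unset Strict Implicit. Unset Printing Implicit Defensive.
Import Order.TTheory GRing.Theory Num.Theory.
Local Open Scope ring_scope.

Definition triple := (bool * bool * bool)%type.
Definition tr (a b c : bool) : triple := (a, b, c).
Definition x1 (x : triple) : bool := x.1.1.
Definition x2 (x : triple) : bool := x.1.2.
Definition x3 (x : triple) : bool := x.2.

Section Scheme.
Variables (K : realType) (Rr W12 W23 W31 : finType).
Notation share := (W12 * W23 * W31)%type.

Definition is_distr (P : {ffun Rr -> K}) : Prop :=
  (forall r, 0 <= P r) /\ \sum_(r : Rr) P r = 1.

Definition prob (P : {ffun Rr -> K}) (E : pred Rr) : K := \sum_(r | E r) P r.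

Definition V1 (w : share) : (W12 * W31)%type := (w.1.1, w.2).
Definition V2 (w : share) : (W23 * W12)%type := (w.1.2, w.1.1).
Definition V3 (w : share) : (W31 * W23)%type := (w.2, w.1.2).

Variable (S : {set triple}).
Variables (P : {ffun Rr -> K}) (psi : triple -> Rr -> share).
(* psi is only used on S x Rr (its values outside S are irrelevant) *)

Definition correct : Prop :=
  (exists phi1 : (W12 * W31)%type -> bool,
      forall x, x \in S -> prob P (fun r => phi1 (V1 (psi x r)) == x1 x) = 1) /\
  (exists phi2 : (W23 * W12)%type -> bool,
      forall x, x \in S -> prob P (fun r => phi2 (V2 (psi x r)) == x2 x) = 1) /\
  (exists phi3 : (W31 * W23)%type -> bool,
      forall x, x \in S -> prob P (fun r => phi3 (V3 (psi x r)) == x3 x) = 1).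

Definition perfectly_private : Prop :=
  (forall x x', x \in S -> x' \in S -> x1 x = x1 x' ->
     forall v, prob P (fun r => V1 (psi x r) == v) = prob P (fun r => V1 (psi x' r) == v)) /\
  (forall x x', x \in S -> x' \in S -> x2 x = x2 x' ->
     forall v, prob P (fun r => V2 (psi x r) == v) = prob P (fun r => V2 (psi x' r) == v)) /\
  (forall x x', x \in S -> x' \in S -> x3 x = x3 x' ->
     forall v, prob P (fun r => V3 (psi x r) == v) = prob P (fun r => V3 (psi x' r) == v)).

Definition is_3SS : Prop := is_distr P /\ correct /\ perfectly_private.

Definition share_support (x : triple) : {set share} :=
  [set w | 0 < prob P (fun r => psi x r == w)].

End Scheme.

Definition S5 : {set triple} :=
  [set tr false false false; tr false false true; tr false true false; tr true true true].

(* Main.v *)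
Require Import Defs.
From mathcomp Require Import all_boot all_order all_algebra.
From mathcomp Require Import reals.
Import Order.TTheory GRing.Theory Num.Theory.
Local Open Scope ring_scope.

Lemma prob_pos_ex (K : realType) (Rr : finType) (P : {ffun Rr -> K}) (E : pred Rr) :
  (forall r, 0 <= P r) -> 0 < prob P E -> exists r, E r /\ 0 < P r.
Proof.
move=> P0 H; case: (pickP (fun r => E r && (0 < P r))) => [r /andP[Er Pr]|Hn].
  by exists r.
move: H; rewrite /prob big1 ?ltxx // => r Er.
apply/eqP; rewrite eq_le P0 andbT leNgt; apply/negP => Hp.
by move: (Hn r); rewrite Er Hp.
Qed.

Lemma ex_prob_pos (K : realType) (Rr : finType) (P : {ffun Rr -> K}) (E : pred Rr) r :
  (forall r, 0 <= P r) -> E r -> 0 < P r -> 0 < prob P E.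
Proof.
move=> P0 Er Pr; rewrite /prob (bigD1 r) //=.
by apply: (lt_le_trans Pr); rewrite lerDl sumr_ge0.
Qed.

Lemma prob1_all (K : realType) (Rr : finType) (P : {ffun Rr -> K}) (E : pred Rr) :
  is_distr P -> prob P E = 1 -> forall r, 0 < P r -> E r.
Proof.
move=> [P0 P1] H r Pr; apply/negPn/negP => nE.
have : prob P (predC E) = 0.
  by move: P1; rewrite (bigID E) /= -/(prob P E) H => /(congr1 (fun t => t - 1)); rewrite addrC addrK subrr.
rewrite /prob => /eqP; rewrite psumr_eq0 => [/allP/(_ r)|]; last by move=> i _; exact: P0.
rewrite mem_index_enum /= nE => /(_ isT)/implyP/(_ isT)/eqP Hr.
by move: Pr; rewrite Hr ltxx.
Qed.

Arguments prob_pos_ex {K Rr P E}.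
Arguments ex_prob_pos {K Rr P E r}.
Arguments prob1_all {K Rr P E}.

Lemma card6 (W12 W23 W31 : finType) (X : {set (W12 * W23 * W31)%type})
  a1 a2 a3 b1 b1' b2 b2' b3 b3' c1 c1' c2 c2' c3 c3' :
  a1 != a2 -> a1 != a3 -> a2 != a3 -> b1 != b1' -> b2 != b2' -> b3 != b3' ->
  ((a1,b1),c1) \in X -> ((a1,b1'),c1') \in X ->
  ((a2,b2),c2) \in X -> ((a2,b2'),c2') \in X ->
  ((a3,b3),c3) \in X -> ((a3,b3'),c3') \in X -> (6 <= #|X|)%N.
Proof.
move=> h12 h13 h23 hb1 hb2 hb3 i1 i2 i3 i4 i5 i6.
set s := [:: ((a1,b1),c1); ((a1,b1'),c1'); ((a2,b2),c2); ((a2,b2'),c2');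
             ((a3,b3),c3); ((a3,b3'),c3')].
have Hu : uniq s.
  rewrite /s /= !inE !xpair_eqE !eqxx (negbTE h12) (negbTE h13) (negbTE h23)
    (negbTE hb1) (negbTE hb2) (negbTE hb3) /= ?andbF //.
have Hs : {subset s <= enum X}.
  by apply/allP; rewrite /= !mem_enum i1 i2 i3 i4 i5 i6.
by have := uniq_leq_size Hu Hs; rewrite -cardE.
Qed.

Arguments card6 {W12 W23 W31 X a1 a2 a3 b1 b1' b2 b2' b3 b3' c1 c1' c2 c2' c3 c3'}.

Theorem mainTheorem5 (K : realType) (Rr W12 W23 W31 : finType)
    (P : {ffun Rr -> K}) (psi : triple -> Rr -> (W12 * W23 * W31)%type) :
  is_3SS S5 P psi ->
  (6 <= #|share_support P psi (tr false false true)|)%N /\ (6 <= #|Rr|)%N.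
Proof.
move=> [Hd [[[phi1 C1] [[phi2 C2] [phi3 C3]]] [Pr1 [Pr2 Pr3]]]].
have P0 := Hd.1.
pose occ x (w : (W12 * W23 * W31)%type) := exists r, 0 < P r /\ psi x r = w.
have D1 : forall x a b c, x \in S5 -> occ x ((a,b),c) -> phi1 (a,c) = x1 x.
  move=> x a b c xS [r [Pr Hr]]; have := prob1_all Hd (C1 x xS) r Pr.
  by rewrite /= Hr /V1 /= => /eqP.
have D2 : forall x a b c, x \in S5 -> occ x ((a,b),c) -> phi2 (b,a) = x2 x.
  move=> x a b c xS [r [Pr Hr]]; have := prob1_all Hd (C2 x xS) r Pr.
  by rewrite /= Hr /V2 /= => /eqP.
have D3 : forall x a b c, x \in S5 -> occ x ((a,b),c) -> phi3 (c,b) = x3 x.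
  move=> x a b c xS [r [Pr Hr]]; have := prob1_all Hd (C3 x xS) r Pr.
  by rewrite /= Hr /V3 /= => /eqP.
have Q1 : forall x x' a b c, x \in S5 -> x' \in S5 -> x1 x = x1 x' ->
    occ x ((a,b),c) -> exists b', occ x' ((a,b'),c).
  move=> x x' a b c xS x'S e [r [Pr Hr]].
  have : 0 < prob P (fun r => V1 (psi x r) == V1 ((a,b),c)).
    by apply: (ex_prob_pos P0 _ Pr); rewrite /= Hr.
  rewrite (Pr1 x x' xS x'S e) => /(prob_pos_ex P0) [r' [/eqP H Pr']].
  move: H; case E: (psi x' r') => [[a' b'] c']; rewrite /V1 /= => -[Ea Ec].
  by exists b', r'; rewrite E Ea Ec.
have Q2 : forall x x' a b c, x \in S5 -> x' \in S5 -> x2 x = x2 x' ->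
    occ x ((a,b),c) -> exists c', occ x' ((a,b),c').
  move=> x x' a b c xS x'S e [r [Pr Hr]].
  have : 0 < prob P (fun r => V2 (psi x r) == V2 ((a,b),c)).
    by apply: (ex_prob_pos P0 _ Pr); rewrite /= Hr.
  rewrite (Pr2 x x' xS x'S e) => /(prob_pos_ex P0) [r' [/eqP H Pr']].
  move: H; case E: (psi x' r') => [[a' b'] c']; rewrite /V2 /= => -[Eb Ea].
  by exists c', r'; rewrite E Ea Eb.
have Q3 : forall x x' a b c, x \in S5 -> x' \in S5 -> x3 x = x3 x' ->
    occ x ((a,b),c) -> exists a', occ x' ((a',b),c).
  move=> x x' a b c xS x'S e [r [Pr Hr]].
  have : 0 < prob P (fun r => V3 (psi x r) == V3 ((a,b),c)).
    by apply: (ex_prob_pos P0 _ Pr); rewrite /= Hr.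
  rewrite (Pr3 x x' xS x'S e) => /(prob_pos_ex P0) [r' [/eqP H Pr']].
  move: H; case E: (psi x' r') => [[a' b'] c']; rewrite /V3 /= => -[Ec Eb].
  by exists a', r'; rewrite E Eb Ec.
pose s000 := tr false false false. pose s001 := tr false false true.
pose s010 := tr false true false. pose s111 := tr true true true.
have i000 : s000 \in S5 by rewrite !inE.
have i001 : s001 \in S5 by rewrite !inE.
have i010 : s010 \in S5 by rewrite !inE.
have i111 : s111 \in S5 by rewrite !inE.
have Dbl : forall a b c, occ s001 ((a,b),c) ->
    exists b2 c1, occ s001 ((a,b2),c1) /\ b2 != b.
  move=> a b c O.
  have [c' O0] := Q2 _ s000 _ _ _ i001 i000 erefl O.
  have [b2 O1] := Q1 _ s001 _ _ _ i000 i001 erefl O0.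
  exists b2, c'; split => //; apply/eqP => Eb; move: O1; rewrite Eb => O1.
  by have := D3 _ _ _ _ i000 O0; rewrite (D3 _ _ _ _ i001 O1).
have SS : forall w, occ s001 w -> w \in share_support P psi s001.
  move=> w [r [Pr Hr]]; rewrite inE; apply: (ex_prob_pos P0 _ Pr).
  by rewrite /= Hr.
have Hsupp : (6 <= #|share_support P psi s001|)%N.
  have [[[a b] c] O] : exists w, occ s001 w.
    have : 0 < prob P predT by rewrite /prob Hd.2 ltr01.
    by move=> /(prob_pos_ex P0) [r [_ Pr]]; exists (psi s001 r), r.
  have [bb Ob] := Q1 _ s010 _ _ _ i001 i010 erefl O.
  have [a'' Ob0] := Q3 _ s000 _ _ _ i010 i000 erefl Ob.
  have ha'' : a != a''.
    apply/eqP => E; move: Ob0; rewrite -E => Ob0.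
    by have := D2 _ _ _ _ i010 Ob; rewrite (D2 _ _ _ _ i000 Ob0).
  have [b3 Ob3] := Q1 _ s001 _ _ _ i000 i001 erefl Ob0.
  have [a2 Ot] := Q3 _ s111 _ _ _ i001 i111 erefl O.
  have ha2 : a != a2.
    apply/eqP => E; move: Ot; rewrite -E => Ot.
    by have := D1 _ _ _ _ i001 O; rewrite (D1 _ _ _ _ i111 Ot).
  have ha2'' : a'' != a2.
    apply/eqP => E; move: Ot; rewrite -E => Ot.
    by have := D1 _ _ _ _ i000 Ob0; rewrite (D1 _ _ _ _ i111 Ot).
  have [c4 Ov] := Q2 _ s010 _ _ _ i111 i010 erefl Ot.
  have [b5 Ow] := Q1 _ s001 _ _ _ i010 i001 erefl Ov.
  have [b1' [c1' [O' hb1]]] := Dbl _ _ _ O.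
  have [b3' [c3' [Ob3' hb3]]] := Dbl _ _ _ Ob3.
  have [b5' [c5' [Ow' hb5]]] := Dbl _ _ _ Ow.
  rewrite eq_sym in hb1; rewrite eq_sym in hb3; rewrite eq_sym in hb5.
  have S1 := SS _ O. have S2 := SS _ O'. have S3 := SS _ Ob3.
  have S4 := SS _ Ob3'. have S5' := SS _ Ow. have S6 := SS _ Ow'.
  exact: (card6 ha'' ha2 ha2'' hb1 hb3 hb5 S1 S2 S3 S4 S5' S6).
split => //.
apply: (leq_trans Hsupp); apply: (leq_trans _ (leq_imset_card (psi s001) Rr)).
apply: subset_leq_card; apply/subsetP => w; rewrite inE.
move/(prob_pos_ex P0) => [r [/eqP <- _]].
by apply: imset_f.
Qed.
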